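(* Let $a>0$, $\alpha\in[0,1)$ and $f\in\mathcal C_a$. Then $s_\alpha=(1-\alpha)^{-1}F_\alpha(x_\alpha^+)<a$.
   Context: $\mathcal C_a$ is the set of $C^1$ functions $f:\mathbb R\to\mathbb R$ that are even, satisfy $f(s)=|s|$ for $|s|\ge a$ and are strictly convex on $[-a,a]$. For $f\in\mathcal C_a$: $F_\alpha(s)=f(s)-\alpha s$, $x_\alpha^+=(f')^{-1}(\alpha)\in[0,a)$ (inverse of $f':[-a,a]\to[-1,1]$); $F_\alpha$ decreases on $(-\infty,x_\alpha^+]$ and increases on $[x_\alpha^+,\infty)$. Let $F_\alpha^{-1}$ be the inverse of $F_\alpha|_{[x_\alpha^+,\infty)}$, $\phi=F_\alpha^{-1}\circ F_\alpha$, $\delta_x=(1-\alpha)^{-1}F_\alpha(x)-\phi(x)$ and $s_\alpha=x_\alpha^++\delta_{x_\alpha^+}$. *)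

(* Defs.v *)
From Stdlib Require Import Reals Lra ClassicalEpsilon.
From Coquelicot Require Import Coquelicot.
Open Scope R_scope.

Definition in_Ca (a : R) (f : R -> R) : Prop :=
  (forall x, ex_derive f x) /\
  (forall x, continuous (Derive f) x) /\
  (forall s, f (- s) = f s) /\
  (forall s, a <= Rabs s -> f s = Rabs s) /\
  (forall x y t, -a <= x <= a -> -a <= y <= a -> x <> y -> 0 < t < 1 ->
     f (t * x + (1 - t) * y) < t * f x + (1 - t) * f y).

Definition Falpha (f : R -> R) (alpha : R) (s : R) : R := f s - alpha * s.

(* x_alpha^+ = (f')^{-1}(alpha), the inverse of f' : [-a,a] -> [-1,1]
   (chosen by Hilbert's epsilon; it is unique for f in C_a). *)
Definition xplus (a : R) (f : R -> R) (alpha : R) : R :=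
  epsilon (inhabits 0) (fun x => -a <= x <= a /\ Derive f x = alpha).

Definition Finv (a : R) (f : R -> R) (alpha : R) (y : R) : R :=
  epsilon (inhabits 0)
    (fun z => xplus a f alpha <= z /\ Falpha f alpha z = y).

Definition phi (a : R) (f : R -> R) (alpha : R) (x : R) : R :=
  Finv a f alpha (Falpha f alpha x).

Definition delta (a : R) (f : R -> R) (alpha : R) (x : R) : R :=
  / (1 - alpha) * Falpha f alpha x - phi a f alpha x.

Definition salpha (a : R) (f : R -> R) (alpha : R) : R :=
  xplus a f alpha + delta a f alpha (xplus a f alpha).

(* Main.v *)
Require Import Defs.
From Stdlib Require Import Reals Lra ClassicalEpsilon.
From Coquelicot Require Import Coquelicot.
Open Scope R_scope.

Lemma deriv_right (f : R -> R) x l :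
  derivable_pt_lim f x l -> (forall h, 0 < h -> f (x + h) = f x + h) -> l = 1.
Proof.
  intros D H. destruct (Req_dec l 1) as [e|n]; auto. exfalso.
  assert (Hp : 0 < Rabs (l - 1)) by (apply Rabs_pos_lt; lra).
  destruct (D _ Hp) as [d Hd].
  assert (hd : 0 < d / 2) by (destruct d; simpl; lra).
  assert (hn : d / 2 <> 0) by lra.
  assert (ha : Rabs (d/2) < d) by (rewrite Rabs_pos_eq; destruct d; simpl in *; lra).
  specialize (Hd _ hn ha). rewrite H in Hd by lra.
  replace ((f x + d / 2 - f x) / (d / 2) - l) with (- (l - 1)) in Hd by (field; lra).
  rewrite Rabs_Ropp in Hd. lra.
Qed.

Lemma deriv_left (f : R -> R) x l :
  derivable_pt_lim f x l -> (forall h, 0 < h -> f (x - h) = f x + h) -> l = -1.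
Proof.
  intros D H. destruct (Req_dec l (-1)) as [e|n]; auto. exfalso.
  assert (Hp : 0 < Rabs (l + 1)) by (apply Rabs_pos_lt; lra).
  destruct (D _ Hp) as [d Hd].
  assert (hd : 0 < d / 2) by (destruct d; simpl; lra).
  assert (hn : - (d / 2) <> 0) by lra.
  assert (ha : Rabs (- (d/2)) < d) by (rewrite Rabs_Ropp, Rabs_pos_eq; destruct d; simpl in *; lra).
  specialize (Hd _ hn ha). replace (x + - (d/2)) with (x - d/2) in Hd by ring.
  rewrite H in Hd by lra.
  replace ((f x + d / 2 - f x) / - (d / 2) - l) with (- (l + 1)) in Hd by (field; lra).
  rewrite Rabs_Ropp in Hd. lra.
Qed.

Lemma tangent (a : R) (f : R -> R) x l z :
  in_Ca a f -> -a <= x <= a -> -a <= z <= a -> derivable_pt_lim f x l ->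
  f x + l * (z - x) <= f z.
Proof.
  intros [_ [_ [_ [_ C]]]] Hx Hz D.
  destruct (Req_dec z x) as [e|n]. { subst; lra. }
  apply Rnot_lt_le; intro Hlt.
  set (d := z - x). set (g := f z - f x - l * d).
  assert (gneg : g < 0) by (unfold g, d; lra).
  assert (dpos : 0 < Rabs d) by (apply Rabs_pos_lt; unfold d; lra).
  assert (ep : 0 < - g / (2 * Rabs d)) by (apply Rdiv_lt_0_compat; lra).
  destruct (D _ ep) as [del Hdel].
  assert (delp : 0 < del) by (destruct del; simpl; lra).
  set (t := Rmin (1/2) (del / (2 * Rabs d))).
  assert (tp : 0 < t) by (unfold t; apply Rmin_glb_lt; [lra| apply Rdiv_lt_0_compat; lra]).
  assert (t1 : t <= 1/2) by apply Rmin_l.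
  assert (t2 : t <= del / (2 * Rabs d)) by apply Rmin_r.
  assert (t2' : t * (2 * Rabs d) <= del).
  { apply (Rmult_le_compat_r (2 * Rabs d)) in t2; [|lra].
    unfold Rdiv in t2. rewrite Rmult_assoc, Rinv_l in t2; lra. }
  assert (hn : t * d <> 0) by (apply Rmult_integral_contrapositive; split; [lra|unfold d; lra]).
  assert (ha : Rabs (t * d) < del).
  { rewrite Rabs_mult, (Rabs_pos_eq t) by lra.
    assert (0 < t * Rabs d) by (apply Rmult_lt_0_compat; lra). lra. }
  specialize (Hdel _ hn ha).
  assert (tt : 0 < t < 1) by lra.
  assert (Cv := C z x t Hz Hx n tt).
  replace (t * z + (1 - t) * x) with (x + t * d) in Cv by (unfold d; ring).
  set (q := (f (x + t * d) - f x) / (t * d)) in Hdel.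
  assert (Hq : f (x + t * d) - f x = q * (t * d)) by (unfold q; field; split; [unfold d; lra | lra]).
  assert (key : d * (q - l) < g).
  { assert (t * (d * q) < t * (f z - f x)) by nra.
    assert (d * q < f z - f x) by nra. unfold g; nra. }
  assert (bd : Rabs (d * (q - l)) < - g / 2).
  { rewrite Rabs_mult.
    replace (- g / 2) with (Rabs d * (- g / (2 * Rabs d))) by (field; lra).
    apply Rmult_lt_compat_l; auto. }
  assert (- (d * (q - l)) <= Rabs (d * (q - l))) by (rewrite <- Rabs_Ropp; apply Rle_abs).
  lra.
Qed.

Lemma strict_tangent (a : R) (f : R -> R) x l z :
  in_Ca a f -> -a <= x <= a -> -a <= z <= a -> z <> x -> derivable_pt_lim f x l ->
  f x + l * (z - x) < f z.
Proof.
  intros Hf Hx Hz n D.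
  pose proof (tangent a f x l ((x + z)/2) Hf Hx ltac:(lra) D) as T.
  destruct Hf as [_ [_ [_ [_ C]]]].
  pose proof (C x z (1/2) Hx Hz ltac:(auto) ltac:(lra)) as Cv.
  replace (1 / 2 * x + (1 - 1 / 2) * z) with ((x + z) / 2) in Cv by field.
  lra.
Qed.

Theorem corollary3p15 (a alpha : R) (f : R -> R) :
  0 < a -> 0 <= alpha < 1 -> in_Ca a f ->
  salpha a f alpha = / (1 - alpha) * Falpha f alpha (xplus a f alpha) /\
  salpha a f alpha < a.
Proof.
  intros Ha Hal Hf.
  pose proof Hf as [Dx [Cd [Ev [Ab Cvx]]]].
  assert (Dl : forall x, derivable_pt_lim f x (Derive f x)).
  { intro x. apply is_derive_Reals. apply Derive_correct. auto. }
  assert (Da : Derive f a = 1).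
  { apply (deriv_right f a); auto. intros h hp.
    rewrite !Ab; rewrite ?Rabs_pos_eq; lra. }
  assert (Dma : Derive f (-a) = -1).
  { apply (deriv_left f (-a)); auto. intros h hp.
    rewrite !Ab; rewrite ?Rabs_left; lra. }
  assert (Ex : exists x, -a <= x <= a /\ Derive f x = alpha).
  { assert (cont : continuity (Derive f)).
    { intro x. apply continuity_pt_filterlim. apply Cd. }
    destruct (IVT_gen (Derive f) (-a) a alpha cont) as [x [H1 H2]].
    { rewrite Da, Dma, Rmin_left, Rmax_right; lra. }
    exists x. rewrite Rmin_left, Rmax_right in H1 by lra. auto. }
  pose proof (epsilon_spec (inhabits 0) _ Ex) as [Hx Hdx].
  fold (xplus a f alpha) in Hx, Hdx.
  set (x := xplus a f alpha) in *.
  assert (xa : x < a).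
  { destruct (Req_dec x a) as [e|n]; [|lra]. rewrite e in Hdx. lra. }
  assert (Fa : Falpha f alpha x < Falpha f alpha a).
  { pose proof (strict_tangent a f x (Derive f x) a Hf Hx ltac:(lra) ltac:(lra) (Dl x)).
    rewrite Hdx in H. unfold Falpha. lra. }
  assert (inc : forall z, x < z -> Falpha f alpha x < Falpha f alpha z).
  { intros z hz. destruct (Rle_lt_dec z a).
    - pose proof (strict_tangent a f x (Derive f x) z Hf Hx ltac:(lra) ltac:(lra) (Dl x)).
      rewrite Hdx in H. unfold Falpha. lra.
    - unfold Falpha in *. rewrite (Ab a) in Fa by (rewrite Rabs_pos_eq; lra).
      rewrite (Ab z) by (rewrite Rabs_pos_eq; lra).
      rewrite (Rabs_pos_eq a) in Fa by lra. rewrite (Rabs_pos_eq z) by lra.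
      assert (0 < (z - a) * (1 - alpha)) by (apply Rmult_lt_0_compat; lra). nra. }
  assert (Hphi : phi a f alpha x = x).
  { assert (E2 : exists z, x <= z /\ Falpha f alpha z = Falpha f alpha x) by (exists x; split; lra).
    pose proof (epsilon_spec (inhabits 0) _ E2) as [z1 z2].
    unfold phi, Finv. fold x. set (w := epsilon _ _) in *.
    destruct (Req_dec w x) as [e|n]; auto.
    pose proof (inc w ltac:(lra)). lra. }
  assert (S : salpha a f alpha = / (1 - alpha) * Falpha f alpha x).
  { unfold salpha, delta. fold x. rewrite Hphi. ring. }
  split; auto. rewrite S.
  assert (Faa : Falpha f alpha a = a * (1 - alpha)).
  { unfold Falpha. rewrite (Ab a) by (rewrite Rabs_pos_eq; lra).
    rewrite Rabs_pos_eq by lra. ring. }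
  rewrite Faa in Fa.
  apply (Rmult_lt_reg_l (1 - alpha)); [lra|].
  rewrite <- Rmult_assoc, Rinv_r, Rmult_1_l by lra. lra.
Qed.
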